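(* For $i=1,2$ let $P_i$ be an irreducible aperiodic transition matrix on the countable set $X_i$ with root $e_i$ satisfying a ratio limit theorem with kernel $h_i$ and ratio limit kernel $H_i(x_i,y_i)=h_i(x_i,y_i)/h_i(e_i,y_i)$; let $\partial_R X_i$ be the ratio limit boundary of $(X_i,P_i)$ and denote also by $H_i(x_i,\cdot)$ the continuous extensions to $\partial_R X_i$. Let $P=P_1\otimes P_2$ on $X=X_1\times X_2$, $p(x_1x_2,y_1y_2)=p_1(x_1,y_1)p_2(x_2,y_2)$, which satisfies a ratio limit theorem with $h(x_1x_2,y_1y_2)=h_1(x_1,y_1)h_2(x_2,y_2)$ and $H(x_1x_2,y_1y_2)=H_1(x_1,y_1)H_2(x_2,y_2)$. On the product boundary $B=(\partial_R X_1\times\partial_R X_2)\cup(X_1\times\partial_R X_2)\cup(\partial_R X_1\times X_2)$ define $\eta_1\eta_2\approx\zeta_1\zeta_2$ iff $H_1(x_1,\eta_1)H_2(x_2,\eta_2)=H_1(x_1,\zeta_1)H_2(x_2,\zeta_2)$ for all $x_1x_2\in X_1\times X_2$ (where $H_i(x_i,y_i)$ for $y_i\in X_i$ is the original kernel). Then the ratio limit boundary of $(X,P)$ is the image of the product boundary $B$ (inside the product compactification of the two ratio limit compactifications) under the factor map of $\approx$, and the extension of $H(x_1x_2,\cdot)$ to it is $H(x_1x_2,\xi)=H_1(x_1,\eta_1)H_2(x_2,\eta_2)$ for any representative $\eta_1\eta_2$ of the class $\xi$.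
   Context: Ratio limit theorem for an irreducible aperiodic transition matrix $P$ on a countable set $X$ with root $e$: $h(x,y)=\lim_n p^{(n)}(x,y)/p^{(n)}(e,e)\in(0,\infty)$ exists for all $x,y$; ratio limit kernel $H(x,y)=h(x,y)/h(e,y)$. The ratio limit compactification is the unique (up to homeomorphism fixing $X$) compact Hausdorff space containing $X$ as discrete open dense subset to which every $H(x,\cdot)$ extends continuously and whose boundary points (points outside $X$, forming the ratio limit boundary) are separated by these extensions. Product compactification of compactifications $\mathcal C(X_1),\mathcal C(X_2)$ with boundaries $\partial X_i$: the space $\mathcal C(X_1)\times\mathcal C(X_2)$ with product topology; its boundary is $(\partial X_1\times\partial X_2)\cup(X_1\times\partial X_2)\cup(\partial X_1\times X_2)$; elements are written $w_1w_2$. *)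

(* Defs.v *)
From HB Require Import structures.
From mathcomp Require Import all_boot all_order all_algebra.
From mathcomp Require Import all_classical all_reals all_analysis.
Set Implicit Arguments. Unset Strict Implicit. Unset Printing Implicit Defensive.
Import Order.TTheory GRing.Theory Num.Theory.
Import numFieldNormedType.Exports.
Local Open Scope classical_set_scope.
Local Open Scope ring_scope.

Section Markov.
Context {R : realType} {X : countType}.

Definition transition_matrix (P : X -> X -> R) : Prop :=
  (forall x y, 0 <= P x y) /\
  (forall x, (\esum_(y in [set: X]) (P x y)%:E = 1)%E).

Fixpoint mpow (P : X -> X -> R) (n : nat) (x y : X) : R :=
  match n with
  | 0 => if x == y then 1 else 0
  | n'.+1 => fine (\esum_(z in [set: X]) (mpow P n' x z * P z y)%:E)
  end.

Definition irreducible_tm (P : X -> X -> R) : Prop :=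
  forall x y, exists n, 0 < mpow P n x y.

(* period 1: the gcd of the return times {n | p^(n)(x,x) > 0} is 1 *)
Definition aperiodic_tm (P : X -> X -> R) : Prop :=
  forall (x : X) (d : nat),
    (forall n, 0 < mpow P n x x -> (d %| n)%N) -> d = 1%N.

Definition ratio_limit (P : X -> X -> R) (e : X) (h : X -> X -> R) : Prop :=
  forall x y, 0 < h x y /\
    (fun n => mpow P n x y / mpow P n e e) @ \oo --> h x y.

Definition RLkernel (e : X) (h : X -> X -> R) (x y : X) : R := h x y / h e y.

(* (K, i, F) is the ratio limit compactification of (X,P) (with kernel h and
   root e): K compact Hausdorff, i : X -> K embeds X as a discrete open dense
   subset, F x : K -> R is the continuous extension of H(x, .), and these
   extensions separate the boundary points (points of K outside i(X)). *)
Definition ratio_limit_compactification (e : X) (h : X -> X -> R)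
    (K : topologicalType) (i : X -> K) (F : X -> K -> R) : Prop :=
  [/\ compact [set: K] /\ hausdorff_space K,
      [/\ injective i, open (range i) & forall x, open [set i x]],
      closure (range i) = [set: K],
      (forall x, continuous (F x) /\ forall y, F x (i y) = RLkernel e h x y) &
      (forall xi zeta, ~ range i xi -> ~ range i zeta -> xi <> zeta ->
         exists x, F x xi <> F x zeta)].
End Markov.

Definition tensor_tm {R : realType} {X1 X2 : Type}
    (P1 : X1 -> X1 -> R) (P2 : X2 -> X2 -> R) (x y : X1 * X2) : R :=
  P1 x.1 y.1 * P2 x.2 y.2.

Definition prod_boundary {X1 X2 : Type} {K1 K2 : Type}
    (i1 : X1 -> K1) (i2 : X2 -> K2) : set (K1 * K2) :=
  [set w | ~ range i1 w.1 \/ ~ range i2 w.2].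

Definition prod_approx {R : realType} {X1 X2 : Type} {K1 K2 : Type}
    (F1 : X1 -> K1 -> R) (F2 : X2 -> K2 -> R) (w v : K1 * K2) : Prop :=
  forall (x1 : X1) (x2 : X2),
    F1 x1 w.1 * F2 x2 w.2 = F1 x1 v.1 * F2 x2 v.2.

(* Main.v *)
Require Import Defs.
From HB Require Import structures.
From mathcomp Require Import all_boot all_order all_algebra.
From mathcomp Require Import all_classical all_reals all_analysis.
Import Order.TTheory GRing.Theory Num.Theory.
Import numFieldNormedType.Exports.
Local Open Scope classical_set_scope.
Local Open Scope ring_scope.

Lemma esumZl (R : realType) (T : choiceType) (S : set T) (a : T -> \bar R) (r : R) :
  0 <= r -> (forall x, (0 <= a x)%E) ->
  (\esum_(i in S) (r%:E * a i) = r%:E * \esum_(i in S) a i)%E.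
Proof.
move=> r0 a0; rewrite /esum -ereal_supZl//; last first.
  by apply/set0P; exists 0%E; exists set0; [exact: fsets_set0|rewrite fsbig_set0].
congr ereal_sup; apply/seteqP; split=> y /=.
  case=> A [finA AS] <-; exists (\sum_(x \in A) a x)%E; first by exists A.
  by rewrite !fsbig_finite// ge0_sume_distrr.
case=> _ [A [finA AS] <-] <-; exists A => //.
by rewrite !fsbig_finite// ge0_sume_distrr.
Qed.

Lemma esumZl_ext (R : realType) (T : choiceType) (a : T -> \bar R) (c : \bar R) :
  (0 <= c)%E -> (forall x, (0 <= a x)%E) ->
  (\esum_(i in [set: T]) (c * a i) = c * \esum_(i in [set: T]) a i)%E.
Proof.
move=> c0 a0; case: c c0 => [r|_|//].
  by rewrite lee_fin => r0; apply: esumZl.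
have [all0|] := pselect (forall i, a i = 0%E).
  by rewrite !esum1 ?mule0// => i _; rewrite all0 ?mule0.
move=> /existsNP [i0 /eqP ai0].
have ai0p : (0 < a i0)%E by rewrite lt0e ai0 a0.
have Sp : (0 < \esum_(i in [set: T]) a i)%E.
  apply: (lt_le_trans ai0p); apply: esum_ge; exists [set i0].
    by split => //; exact: finite_set1.
  by rewrite fsbig_set1.
rewrite gt0_mulye//; apply/eqP; rewrite eq_le leey /=.
apply: esum_ge; exists [set i0]; first by split => //; exact: finite_set1.
by rewrite fsbig_set1 gt0_mulye.
Qed.

Lemma esumM (R : realType) (T1 T2 : choiceType) (a : T1 -> R) (b : T2 -> R) :
  (forall x, 0 <= a x) -> (forall x, 0 <= b x) ->
  (\esum_(z in [set: T1 * T2]) (a z.1 * b z.2)%:E =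
   (\esum_(i in [set: T1]) (a i)%:E) * (\esum_(j in [set: T2]) (b j)%:E))%E.
Proof.
move=> a0 b0.
have -> : [set: T1 * T2] = [set: T1] `*`` (fun _ => [set: T2]).
  by apply/seteqP; split => z.
rewrite -(esum_esum (a := fun i j => (a i * b j)%:E)); last first.
  by move=> i j _ _; rewrite lee_fin mulr_ge0.
transitivity (\esum_(i in [set: T1]) ((a i)%:E * \esum_(j in [set: T2]) (b j)%:E))%E.
  congr esum; apply: funext => i; rewrite -esumZl//.
under eq_esum do rewrite muleC.
rewrite esumZl_ext//; first by rewrite muleC.
by apply: esum_ge0 => j _; rewrite lee_fin.
Qed.

Lemma fineM_ge0 (R : realType) (x y : \bar R) : (0 <= x)%E -> (0 <= y)%E ->
  fine (x * y)%E = fine x * fine y.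
Proof.
case: x => [r| |] // ; case: y => [s| |] //= => hx hy.
- rewrite mulr0; have [->|rp] := eqVneq r 0; first by rewrite mul0e.
  by rewrite gt0_muley // lte_fin lt_neqAle eq_sym rp -lee_fin.
- rewrite mul0r; have [->|sp] := eqVneq s 0; first by rewrite mule0.
  by rewrite gt0_mulye // lte_fin lt_neqAle eq_sym sp -lee_fin.
- by rewrite mulr0.
Qed.

Lemma mpow_ge0 (R : realType) (X : countType) (P : X -> X -> R) :
  (forall x y, 0 <= P x y) -> forall n x y, 0 <= mpow P n x y.
Proof.
move=> P0; elim=> [|n IH] x y /=; first by case: eqP.
by apply: fine_ge0; apply: esum_ge0 => z _; rewrite lee_fin mulr_ge0.
Qed.

Lemma mpow_tensor (R : realType) (X1 X2 : countType)
  (P1 : X1 -> X1 -> R) (P2 : X2 -> X2 -> R) :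
  (forall x y, 0 <= P1 x y) -> (forall x y, 0 <= P2 x y) ->
  forall n (x y : X1 * X2),
  mpow (tensor_tm P1 P2) n x y = mpow P1 n x.1 y.1 * mpow P2 n x.2 y.2.
Proof.
move=> P10 P20; elim=> [|n IH] [x1 x2] [y1 y2] /=.
  rewrite xpair_eqE; case: eqP; case: eqP => //= _ _; by rewrite ?mulr1 ?mulr0 ?mul0r.
rewrite -fineM_ge0; last 2 first.
- by apply: esum_ge0 => z _; rewrite lee_fin mulr_ge0// mpow_ge0.
- by apply: esum_ge0 => z _; rewrite lee_fin mulr_ge0// mpow_ge0.
rewrite -esumM; last 2 first.
- by move=> z; rewrite mulr_ge0// mpow_ge0.
- by move=> z; rewrite mulr_ge0// mpow_ge0.
congr fine; congr esum; apply: funext => z.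
by rewrite IH /tensor_tm /=; congr EFin; rewrite !mulrA; congr (_ * _); rewrite -!mulrA; congr (_ * _); rewrite mulrC.
Qed.

Definition pb {Y : Type} {T : topologicalType} (g : Y -> T) (t : T) : set_system Y :=
  filter_from (nbhs t) (fun U => g @^-1` U).

Lemma pb_proper {Y : Type} {T : topologicalType} (g : Y -> T) t :
  (forall U, nbhs t U -> exists y, U (g y)) -> ProperFilter (pb g t).
Proof.
move=> dn; apply: filter_from_proper.
  apply: filter_from_filter; first by exists setT; exact: filterT.
  move=> U V hU hV; exists (U `&` V); first exact: filterI.
  by move=> y.
by move=> U /dn [y Uy]; exists y.
Qed.

Lemma pb_cvg {Y : Type} {T : topologicalType} (g : Y -> T) t : g @ pb g t --> t.
Proof. by move=> U hU; exists U. Qed.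

Lemma cluster_lim {R : realType} {T : topologicalType} {Y : Type} (G : set_system Y)
  (g : Y -> T) (f : T -> R) (c : Y -> R) t l :
  Filter G -> {for t, continuous f} -> (forall z, f (g z) = c z) ->
  cluster (g @ G) t -> c @ G --> l -> f t = l.
Proof.
move=> FG ft fgc cl cv.
have clc : cluster (c @ G) (f t).
  move=> A B cA nB.
  have [k [Ak Bk]] : (f @^-1` A) `&` (f @^-1` B) !=set0.
    have h1 : (g @ G) (f @^-1` A).
      rewrite /= /fmap /=.
      suff -> : g @^-1` (f @^-1` A) = c @^-1` A by [].
      by apply/funext => y; rewrite /preimage /= fgc.
    have h2 : nbhs t (f @^-1` B) by exact: ft.
    exact: (cl _ _ h1 h2).
  by exists (f k).
have := cvg_cluster cv clc.
by move/Rhausdorff.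
Qed.

Section Main.
Context {R : realType} {X1 X2 : Type} {K1 K2 K : topologicalType}
  (i1 : X1 -> K1) (i2 : X2 -> K2) (i : X1 * X2 -> K)
  (F1 : X1 -> K1 -> R) (F2 : X2 -> K2 -> R) (F : X1 * X2 -> K -> R)
  (cK1 : compact [set: K1]) (hK1 : hausdorff_space K1) (inj1 : injective i1)
  (op1 : forall x, open [set i1 x]) (dense1 : closure (range i1) = setT)
  (cK2 : compact [set: K2]) (hK2 : hausdorff_space K2) (inj2 : injective i2)
  (op2 : forall x, open [set i2 x]) (dense2 : closure (range i2) = setT)
  (cK : compact [set: K]) (hK : hausdorff_space K) (injK : injective i)
  (opK : forall x, open [set i x]) (denseK : closure (range i) = setT)
  (cF1 : forall x, continuous (F1 x)) (cF2 : forall x, continuous (F2 x))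
  (cF : forall x, continuous (F x))
  (sepK : forall xi zeta, ~ range i xi -> ~ range i zeta -> xi <> zeta ->
         exists x, F x xi <> F x zeta)
  (kerF : forall x z, F x (i z) = F1 x.1 (i1 z.1) * F2 x.2 (i2 z.2)).

Let j (z : X1 * X2) : K1 * K2 := (i1 z.1, i2 z.2).
Let Phi (x : X1 * X2) (w : K1 * K2) : R := F1 x.1 w.1 * F2 x.2 w.2.

Lemma nbhs_setX {w : K1 * K2} {A B} : nbhs w.1 A -> nbhs w.2 B -> nbhs w (A `*` B).
Proof. by move=> hA hB; exists (A, B). Qed.

Lemma dense_j (w : K1 * K2) U : nbhs w U -> exists z, U (j z).
Proof.
move=> [[A B] /= [hA hB] sub].
have : closure (range i1) w.1 by rewrite dense1.
move=> /(_ A hA) [_ [[x1 _ <-] Ax1]].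
have : closure (range i2) w.2 by rewrite dense2.
move=> /(_ B hB) [_ [[x2 _ <-] Bx2]].
by exists (x1, x2); apply: sub.
Qed.

Lemma dense_i (k : K) U : nbhs k U -> exists z, U (i z).
Proof.
move=> hU; have : closure (range i) k by rewrite denseK.
by move=> /(_ U hU) [_ [[z _ <-] Uz]]; exists z.
Qed.

Lemma Phi_cont x : continuous (Phi x).
Proof.
move=> w.
have c1 : {for w, continuous (F1 x.1 \o fst)}.
  apply: continuous_comp; last exact: cF1.
  move=> A hA; suff h : nbhs w (fst @^-1` A) by [].
  by apply: filterS (nbhs_setX hA filterT) => -[a b] [].
have c2 : {for w, continuous (F2 x.2 \o snd)}.
  apply: continuous_comp; last exact: cF2.
  move=> A hA; suff h : nbhs w (snd @^-1` A) by [].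
  by apply: filterS (nbhs_setX filterT hA) => -[a b] [].
exact: (continuousM c1 c2).
Qed.

Lemma pbj_proper (w : K1 * K2) : ProperFilter (pb j w).
Proof. exact: pb_proper (@dense_j w). Qed.

Lemma pbi_proper (k : K) : ProperFilter (pb i k).
Proof. exact: pb_proper (@dense_i k). Qed.

Lemma clFw_val {w : K1 * K2} {xi} : cluster (i @ pb j w) xi ->
  forall x, F x xi = Phi x w.
Proof.
move=> cl x.
apply: (@cluster_lim R K _ (pb j w) i (F x) (fun z => Phi x (j z)) xi (Phi x w)).
- by have [] := pbj_proper w.
- exact: cF.
- by move=> z; rewrite kerF.
- exact: cl.
- by move=> A hA; exact: (pb_cvg j w _ (Phi_cont x w _ hA)).
Qed.

Lemma singleton_nbhs_j (y : X1 * X2) : nbhs (j y) ([set i1 y.1] `*` [set i2 y.2]).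
Proof.
apply: nbhs_setX.
  by apply: open_nbhs_nbhs; split => //=; exact: op1.
by apply: open_nbhs_nbhs; split => //=; exact: op2.
Qed.

Lemma j_single (y z : X1 * X2) : ([set i1 y.1] `*` [set i2 y.2]) (j z) -> z = y.
Proof.
case: y z => [y1 y2] [z1 z2] [/= /inj1 -> /inj2 ->] //.
Qed.

Lemma clFw_bd {w : K1 * K2} {xi} : ~ range j w -> cluster (i @ pb j w) xi -> ~ range i xi.
Proof.
move=> nb cl [y _ yxi].
have hU : forall U, nbhs w U -> U (j y).
  move=> U hU.
  have h1 : (i @ pb j w) (i @` (j @^-1` U)).
    by exists U => // z Uz; exists z.
  have h2 : nbhs xi [set i y].
    by apply: open_nbhs_nbhs; split; [exact: opK|rewrite yxi].
  have [k [[z Uz <-] /= /injK zy]] := cl _ _ h1 h2.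
  by rewrite -zy.
apply: nb; exists y => //; rewrite /j [w]surjective_pairing; congr pair.
- apply: hK1 => A B hA hB; exists (i1 y.1); split; first exact: nbhs_singleton.
  by have [] := hU _ (nbhs_setX (w:=w) hB filterT).
- apply: hK2 => A B hA hB; exists (i2 y.2); split; first exact: nbhs_singleton.
  by have [] := hU _ (nbhs_setX (w:=w) filterT hB).
Qed.

Lemma clFw_int {y : X1 * X2} {xi} : cluster (i @ pb j (j y)) xi -> xi = i y.
Proof.
move=> cl; apply: hK => A B hA hB; exists (i y); split; last exact: nbhs_singleton.
have h1 : (i @ pb j (j y)) [set i y].
  by exists ([set i1 y.1] `*` [set i2 y.2]); [exact: singleton_nbhs_j|move=> z /j_single ->].
by have [k [/= -> ?]] := cl _ _ h1 hA.
Qed.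

Lemma ex_cl (w : K1 * K2) : exists xi, cluster (i @ pb j w) xi.
Proof.
have PF := pbj_proper w.
have [xi [_ cl]] := cK (i @ pb j w) _ filterT.
by exists xi.
Qed.

Definition pi (w : K1 * K2) : K := projT1 (cid (ex_cl w)).

Lemma pi_cl (w : K1 * K2) : cluster (i @ pb j w) (pi w).
Proof. exact: (projT2 (cid (ex_cl w))). Qed.

Lemma pi_j y : pi (j y) = i y.
Proof. exact: clFw_int (pi_cl _). Qed.

Lemma pi_val (w : K1 * K2) x : F x (pi w) = Phi x w.
Proof. exact: (clFw_val (pi_cl w) x). Qed.

Lemma pi_bd {w : K1 * K2} : ~ range j w -> ~ range i (pi w).
Proof. by move=> nb; apply: clFw_bd nb (pi_cl _). Qed.

Lemma sep_eq {xi zeta : K} : ~ range i xi -> ~ range i zeta ->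
  (forall x, F x xi = F x zeta) -> xi = zeta.
Proof.
move=> nx nz eqF; apply: contrapT => neq.
by have [x /(_ (eqF x))] := sepK _ _ nx nz neq.
Qed.

Lemma cl_uniq (w : K1 * K2) : cluster (i @ pb j w) = [set pi w].
Proof.
apply/seteqP; split => xi; last by move=> ->; exact: pi_cl.
move=> cl /=.
have [[y _ wy]|nb] := pselect (range j w).
  by subst w; rewrite pi_j; exact: clFw_int cl.
apply: sep_eq; [exact: clFw_bd cl|exact: pi_bd|].
by move=> x; rewrite pi_val (clFw_val cl).
Qed.

Lemma pi_cvg (w : K1 * K2) : i @ pb j w --> pi w.
Proof.
have PF := pbj_proper w.
apply: (@compact_cluster_set1 K (pi w) _ setT hK cK filterT _ filterT).
exact: cl_uniq.
Qed.

Lemma pi_cont : continuous pi.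
Proof.
move=> w V hV.
have reg : {for pi w, regular_space K}.
  by apply: (@compact_regular K (pi w) setT hK cK); exact: filterT.
have [C hC sCV] := reg V hV.
have [U hU sU] := pi_cvg w _ hC.
rewrite nbhsE in hU; case: hU => U0 [oU0 U0w] sU0.
rewrite /= nbhs_simpl.
apply: (filterS (P:=U0)); last exact: open_nbhs_nbhs.
move=> w' U0w'; apply: sCV => B hB.
have h1 : (i @ pb j w') C.
  exists U0; first exact: open_nbhs_nbhs.
  by move=> z U0z; apply: sU; apply: sU0.
exact: (pi_cl w' _ _ h1 hB).
Qed.

Lemma pi_surj (k : K) : exists w, pi w = k.
Proof.
have [[y _ <-]|nk] := pselect (range i k); first by exists (j y); exact: pi_j.
have PF := pbi_proper k.
have cX : compact [set: K1 * K2].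
  by rewrite -setXTT; exact: compact_setX.
have [w [_ cl]] := cX (j @ pb i k) _ filterT.
have vals : forall x, Phi x w = F x k.
  move=> x.
  have cv : (fun z => F x (i z)) @ pb i k --> F x k.
    by move=> A hA; exact: (pb_cvg i k _ (cF x k _ hA)).
  exact: (@cluster_lim R _ _ (pb i k) j (Phi x) (fun z => F x (i z)) w (F x k) _
    (Phi_cont x w) (fun z => esym (kerF x z)) cl cv).
have nb : ~ range j w.
  move=> [y _ wy]; subst w; apply: nk; exists y => //.
  apply: hK => A B hA hB; exists (i y); split; first exact: nbhs_singleton.
  have h1 : (j @ pb i k) (j @` (i @^-1` B)) by exists B => // z Bz; exists z.
  have [_ [[z Bz <-] /j_single zy]] := cl _ _ h1 (singleton_nbhs_j y).
  by rewrite -zy.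
exists w; apply: sep_eq => //; first exact: pi_bd.
by move=> x; rewrite pi_val vals.
Qed.

Lemma bd_nrange (w : K1 * K2) : prod_boundary i1 i2 w -> ~ range j w.
Proof.
by case=> nr [y _ wy]; apply: nr; [exists y.1|exists y.2]; rewrite // -wy.
Qed.

Lemma main_topo : exists pi0 : K1 * K2 -> K,
  [/\ continuous pi0 /\ (forall k : K, exists w, pi0 w = k),
      (forall x : X1 * X2, pi0 (i1 x.1, i2 x.2) = i x),
      (forall w, prod_boundary i1 i2 w -> ~ range i (pi0 w)),
      (forall w v, prod_boundary i1 i2 w -> prod_boundary i1 i2 v ->
          (pi0 w = pi0 v <-> prod_approx F1 F2 w v)) &
      (forall (x : X1 * X2) w, prod_boundary i1 i2 w ->
          F x (pi0 w) = F1 x.1 w.1 * F2 x.2 w.2)].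
Proof.
exists pi; split.
- by split; [exact: pi_cont|exact: pi_surj].
- by move=> x; exact: pi_j.
- by move=> w bw; apply: pi_bd; exact: bd_nrange.
- move=> w v bw bv; split.
  + move=> e x1 x2; have := pi_val w (x1, x2); have := pi_val v (x1, x2).
    by rewrite e => -> /esym.
  + move=> ap; apply: sep_eq; [exact: pi_bd (bd_nrange w bw)|exact: pi_bd (bd_nrange v bv)|].
    by move=> [x1 x2]; rewrite !pi_val; exact: ap.
- by move=> x w _; exact: pi_val.
Qed.
End Main.

Theorem lemma5p1 (R : realType) (X1 X2 : countType)
  (P1 : X1 -> X1 -> R) (P2 : X2 -> X2 -> R) (e1 : X1) (e2 : X2)
  (h1 : X1 -> X1 -> R) (h2 : X2 -> X2 -> R)
  (K1 K2 : topologicalType) (i1 : X1 -> K1) (i2 : X2 -> K2)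
  (F1 : X1 -> K1 -> R) (F2 : X2 -> K2 -> R) :
  transition_matrix P1 -> irreducible_tm P1 -> aperiodic_tm P1 ->
  ratio_limit P1 e1 h1 ->
  transition_matrix P2 -> irreducible_tm P2 -> aperiodic_tm P2 ->
  ratio_limit P2 e2 h2 ->
  ratio_limit_compactification e1 h1 i1 F1 ->
  ratio_limit_compactification e2 h2 i2 F2 ->
  let h := fun x y : X1 * X2 => h1 x.1 y.1 * h2 x.2 y.2 in
  ratio_limit (tensor_tm P1 P2) (e1, e2) h /\
  (forall x y : X1 * X2,
      RLkernel (e1, e2) h x y = RLkernel e1 h1 x.1 y.1 * RLkernel e2 h2 x.2 y.2) /\
  forall (K : topologicalType) (i : X1 * X2 -> K) (F : X1 * X2 -> K -> R),
    ratio_limit_compactification (e1, e2) h i F ->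
    exists pi : K1 * K2 -> K,
      [/\ continuous pi /\ (forall k : K, exists w, pi w = k),
          (forall x : X1 * X2, pi (i1 x.1, i2 x.2) = i x),
          (forall w, prod_boundary i1 i2 w -> ~ range i (pi w)),
          (forall w v, prod_boundary i1 i2 w -> prod_boundary i1 i2 v ->
              (pi w = pi v <-> prod_approx F1 F2 w v)) &
          (forall (x : X1 * X2) w, prod_boundary i1 i2 w ->
              F x (pi w) = F1 x.1 w.1 * F2 x.2 w.2)].
Proof.
move=> tm1 _ _ rl1 tm2 _ _ rl2 C1 C2 h.
have P10 := tm1.1; have P20 := tm2.1.
have kerid : forall x y : X1 * X2,
    RLkernel (e1, e2) h x y = RLkernel e1 h1 x.1 y.1 * RLkernel e2 h2 x.2 y.2.
  by move=> x y; rewrite /RLkernel /h /= invfM mulrACA.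
split.
  move=> x y; split; first by rewrite /h mulr_gt0 // ?(rl1 _ _).1 ?(rl2 _ _).1.
  have -> : (fun n => mpow (tensor_tm P1 P2) n x y / mpow (tensor_tm P1 P2) n (e1, e2) (e1, e2))
      = (fun n => (mpow P1 n x.1 y.1 / mpow P1 n e1 e1) * (mpow P2 n x.2 y.2 / mpow P2 n e2 e2)).
    by apply/funext => n; rewrite !mpow_tensor // invfM mulrACA.
  exact: cvgM (rl1 _ _).2 (rl2 _ _).2.
split; first exact: kerid.
move=> K i F CK.
case: C1 => [[cK1 hK1] [inj1 _ op1] dense1 cF1 sep1].
case: C2 => [[cK2 hK2] [inj2 _ op2] dense2 cF2 sep2].
case: CK => [[cK hK] [injK _ opK] denseK cF sepK].
apply: (main_topo i1 i2 i F1 F2 F cK1 hK1 inj1 op1 dense1 cK2 hK2 inj2 op2 dense2 cK hK injK opK denseK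
  (fun x => (cF1 x).1) (fun x => (cF2 x).1) (fun x => (cF x).1) sepK).
by move=> x z; rewrite (cF x).2 kerid (cF1 x.1).2 (cF2 x.2).2.
Qed.
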